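(* In the transductive setting, let $H$ be a hypothesis set bounded by $B$ and $L$ a uniformly $\beta$-cost-stable algorithm whose returned hypotheses lie in $H$. Let $h$ be the hypothesis returned by $L$ when trained on the random training set $S$ (with test set $T=X\setminus S$). Then for any $\delta>0$, with probability at least $1-\delta$ over the choice of $S$, $$R(h)\le\widehat R(h)+\beta+\Big(2\beta+\frac{B^2(m+u)}{mu}\Big)\sqrt{\frac{\alpha(m,u)\ln\frac1\delta}{2}},\qquad \alpha(m,u)=\frac{mu}{m+u-1/2}\cdot\frac{1}{1-1/(2\max\{m,u\})}.$$
   Context: Transductive setting: a fixed full sample $X=\{x_1,\dots,x_{m+u}\}$ of $m+u$ points, each with a real label $y(x)$. A training set $S\subset X$ of size $m$ is drawn uniformly at random without replacement, its labels are revealed, and $T=X\setminus S$ (of size $u$) is the test set. An algorithm $L$ maps $S$ (with labels) and $T$ to a hypothesis $h_S\colon X\to\mathbb{R}$. Loss: $c(h,x)=(h(x)-y(x))^2$. Training error $\widehat R(h)=\frac1m\sum_{x\in S}c(h,x)$, test error $R(h)=\frac1u\sum_{x\in T}c(h,x)$. Two training sets $S,S'$ differ in exactly one point if $S'=(S\setminus\{x\})\cup\{x'\}$ with $x\in S$, $x'\in X\setminus S$. $L$ is uniformly $\beta$-cost-stable if for all such pairs $S,S'$ and all $x\in X$, $|c(h_{S'},x)-c(h_S,x)|\le\beta$. A hypothesis set $H$ is bounded by $B>0$ if $|h(x)-y(x)|\le B$ for all $h\in H$, $x\in X$. *)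

(* Defs.v *)
From mathcomp Require Import all_boot.
From Stdlib Require Import Reals.
Set Implicit Arguments. Unset Strict Implicit.

Definition sumR {n : nat} (A : {set 'I_n}) (f : 'I_n -> R) : R :=
  \big[Rplus/R0]_(i in A) f i.

Definition cost {n : nat} (y : 'I_n -> R) (h : 'I_n -> R) (x : 'I_n) : R :=
  ((h x - y x) ^ 2)%R.

Definition train_err {n : nat} (m : nat) (y h : 'I_n -> R) (S : {set 'I_n}) : R :=
  (sumR S (cost y h) / INR m)%R.

Definition test_err {n : nat} (u : nat) (y h : 'I_n -> R) (S : {set 'I_n}) : R :=
  (sumR (~: S) (cost y h) / INR u)%R.

Definition Rleb (a b : R) : bool := if Rle_dec a b then true else false.

(* probability of event P when S is a uniformly random subset of size m *)
Definition prob_subsets {n : nat} (m : nat) (P : {set 'I_n} -> bool) : R :=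
  (INR #|[set S : {set 'I_n} | (#|S| == m) && P S]|
   / INR #|[set S : {set 'I_n} | #|S| == m]|)%R.

Definition alpha (m u : nat) : R :=
  ((INR m * INR u) / (INR m + INR u - / 2)
   * / (1 - / (2 * Rmax (INR m) (INR u))))%R.

Definition bounded_by {n : nat} (y : 'I_n -> R) (H : ('I_n -> R) -> Prop) (B : R) : Prop :=
  forall h, H h -> forall x, (Rabs (h x - y x) <= B)%R.

Definition cost_stable {n : nat} (m : nat) (y : 'I_n -> R)
  (L : {set 'I_n} -> ('I_n -> R)) (beta : R) : Prop :=
  forall (S : {set 'I_n}) (x x' : 'I_n),
    #|S| = m -> x \in S -> x' \notin S ->
    forall z, (Rabs (cost y (L ((S :\ x) :|: [set x'])) z - cost y (L S) z) <= beta)%R.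

(* Main.v *)
Require Import Defs.
From HB Require Import structures.
From mathcomp Require Import all_boot.
From Stdlib Require Import Reals Lra.
Open Scope R_scope.

Lemma dpl_eq f x l l' : l = l' -> derivable_pt_lim f x l -> derivable_pt_lim f x l'.
Proof. by intros ->. Qed.
Lemma dpl_plus f g x a b : derivable_pt_lim f x a -> derivable_pt_lim g x b ->
  derivable_pt_lim (fun y => f y + g y) x (a + b).
Proof. exact (derivable_pt_lim_plus f g x a b). Qed.
Lemma dpl_minus f g x a b : derivable_pt_lim f x a -> derivable_pt_lim g x b ->
  derivable_pt_lim (fun y => f y - g y) x (a - b).
Proof. exact (derivable_pt_lim_minus f g x a b). Qed.
Lemma dpl_mult f g x a b : derivable_pt_lim f x a -> derivable_pt_lim g x b ->
  derivable_pt_lim (fun y => f y * g y) x (a * g x + f x * b).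
Proof. exact (derivable_pt_lim_mult f g x a b). Qed.
Lemma dpl_div f g x a b : derivable_pt_lim f x a -> derivable_pt_lim g x b -> g x <> 0 ->
  derivable_pt_lim (fun y => f y / g y) x ((a * g x - b * f x) / (g x)²).
Proof. exact (derivable_pt_lim_div f g x a b). Qed.
Lemma dpl_const c x : derivable_pt_lim (fun _ => c) x 0.
Proof. exact (derivable_pt_lim_const c x). Qed.
Lemma dpl_id x : derivable_pt_lim (fun y => y) x 1.
Proof. exact (derivable_pt_lim_id x). Qed.
Lemma dpl_exp f x a : derivable_pt_lim f x a ->
  derivable_pt_lim (fun y => exp (f y)) x (exp (f x) * a).
Proof. move=> H. exact (derivable_pt_lim_comp f exp x a _ H (derivable_pt_lim_exp _)). Qed.
Lemma dpl_ln f x a : derivable_pt_lim f x a -> 0 < f x ->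
  derivable_pt_lim (fun y => ln (f y)) x (/ f x * a).
Proof. move=> H P. exact (derivable_pt_lim_comp f ln x a _ H (derivable_pt_lim_ln _ P)). Qed.

Section Core.
Variable p : R.
Hypothesis hp : 0 <= p <= 1.
Let D h := (1 - p) + p * exp h.
Lemma D_pos h : 0 < D h.
Proof.
rewrite /D. have := exp_pos h => e.
destruct (Rle_lt_dec 1 p) as [H|H].
- have -> : p = 1 by lra. lra.
- have : 0 <= p * exp h by apply Rmult_le_pos; lra. lra.
Qed.
Let G h := h * h / 8 + p * h - ln (D h).
Let G' h := h / 4 + p - p * exp h / D h.
Let G'' h := / 4 - (1 - p) * (p * exp h) / (D h * D h).

Lemma dG h : derivable_pt_lim G h (G' h).
Proof.
have dD : forall z, derivable_pt_lim D z (p * exp z).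
  move=> z. rewrite /D. apply: (dpl_eq _ _ (0 + (0 * exp z + p * (exp z * 1)))).
  ring. apply: dpl_plus. apply: dpl_const. apply: dpl_mult. apply: dpl_const.
  apply: dpl_exp. apply: dpl_id.
rewrite /G /G'.
apply: (dpl_eq _ _ (((1 * h + h * 1) * 8 - 0 * (h*h)) / 8² + (0 * h + p * 1) - / D h * (p * exp h))).
- have Hd := D_pos h. rewrite /Rsqr; field; lra.
- apply: dpl_minus. apply: dpl_plus. apply: dpl_div. apply: dpl_mult; apply: dpl_id.
  apply: dpl_const. lra. apply: dpl_mult. apply: dpl_const. apply: dpl_id.
  apply: dpl_ln. apply: dD. apply: D_pos.
Qed.

Lemma dG' h : derivable_pt_lim G' h (G'' h).
Proof.
have dD : forall z, derivable_pt_lim D z (p * exp z).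
  move=> z. rewrite /D. apply: (dpl_eq _ _ (0 + (0 * exp z + p * (exp z * 1)))).
  ring. apply: dpl_plus. apply: dpl_const. apply: dpl_mult. apply: dpl_const.
  apply: dpl_exp. apply: dpl_id.
rewrite /G' /G''.
apply: (dpl_eq _ _ ((1 * 4 - 0 * h) / 4² + 0 - ((0 * exp h + p * (exp h * 1)) * D h - p * exp h * (p * exp h)) / (D h)²)).
- have Hd := D_pos h. rewrite /D in Hd *. rewrite /Rsqr; field; lra.
- apply: dpl_minus. apply: dpl_plus. apply: dpl_div. apply: dpl_id. apply: dpl_const. lra.
  apply: dpl_const. apply: dpl_div. apply: dpl_mult. apply: dpl_const.
  apply: dpl_exp. apply: dpl_id. apply: dD. have := D_pos h. lra.
Qed.

Lemma G''_pos h : 0 <= G'' h.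
Proof.
rewrite /G''. have Hd := D_pos h.
have -> : / 4 - (1 - p) * (p * exp h) / (D h * D h) =
   ((1 - p) - p * exp h) * ((1 - p) - p * exp h) / (4 * (D h * D h)).
  rewrite /D in Hd *. rewrite /Rsqr; field; lra.
apply: Rmult_le_pos. apply: Rle_0_sqr. apply: Rlt_le. apply: Rinv_0_lt_compat.
apply: Rmult_lt_0_compat. lra. by apply: Rmult_lt_0_compat.
Qed.

Lemma G'0 : G' 0 = 0.
Proof. rewrite /G' /D exp_0. field. lra. Qed.
Lemma G0 : G 0 = 0.
Proof. rewrite /G /D exp_0. have -> : 1 - p + p * 1 = 1 by ring. rewrite ln_1. field. Qed.

Lemma G'_sign c : 0 <= c * G' c.
Proof.
destruct (Rtotal_order 0 c) as [H|[H|H]].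
- destruct (MVT_cor2 G' G'' 0 c H (fun z _ => dG' z)) as [d [Hd _]].
  rewrite G'0 in Hd. have := G''_pos d. nra.
- subst. lra.
- destruct (MVT_cor2 G' G'' c 0 H (fun z _ => dG' z)) as [d [Hd _]].
  rewrite G'0 in Hd. have := G''_pos d. nra.
Qed.

Lemma G_pos h : 0 <= G h.
Proof.
destruct (Rtotal_order 0 h) as [H|[H|H]].
- destruct (MVT_cor2 G G' 0 h H (fun z _ => dG z)) as [d [Hd Hr]].
  rewrite G0 in Hd. have := G'_sign d. nra.
- subst. rewrite G0. lra.
- destruct (MVT_cor2 G G' h 0 H (fun z _ => dG z)) as [d [Hd Hr]].
  rewrite G0 in Hd. have := G'_sign d. nra.
Qed.

Lemma core h : (1 - p) * exp (- p * h) + p * exp ((1 - p) * h) <= exp (h * h / 8).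
Proof.
have E : (1 - p) * exp (- p * h) + p * exp ((1 - p) * h) = exp (- p * h) * D h.
  rewrite /D. have -> : (1 - p) * h = - p * h + h by ring. rewrite exp_plus. ring.
rewrite E. have -> : h * h / 8 = G h + (- p * h + ln (D h)) by rewrite /G; ring.
rewrite exp_plus exp_plus exp_ln; last by apply: D_pos.
have := G_pos h => Hg. have H1 : 1 <= exp (G h).
  have := exp_ineq1_le (G h). lra.
have Hd := D_pos h. have He := exp_pos (- p * h).
have : 0 <= exp (- p * h) * D h by apply: Rmult_le_pos; lra.
nra.
Qed.
End Core.

Lemma exp_le_mono x y : x <= y -> exp x <= exp y.
Proof. move=> [H|->]; [left; exact: exp_increasing | right; done]. Qed.

Lemma frac01 e d : 0 < d -> 0 <= e <= d -> 0 <= e / d <= 1.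
Proof.
move=> Hd [H1 H2]. have Hi : 0 < / d by apply: Rinv_0_lt_compat.
split. by apply: Rmult_le_pos; lra.
have -> : 1 = d / d by field; lra.
by apply: Rmult_le_compat_r; lra.
Qed.

HB.instance Definition _ := Monoid.isComLaw.Build R 0%R Rplus (fun a b c => esym (Rplus_assoc a b c)) Rplus_comm Rplus_0_l.

Section Sums.
Variable I : finType.

Lemma sR_mull (P : pred I) c F :
  \big[Rplus/0]_(i | P i) (c * F i) = c * \big[Rplus/0]_(i | P i) F i.
Proof.
apply: (big_rec2 (fun a b => a = c * b)); first ring.
by move=> i a b _ ->; ring.
Qed.

Lemma sR_le (P : pred I) F G : (forall i, P i -> F i <= G i) ->
  \big[Rplus/0]_(i | P i) F i <= \big[Rplus/0]_(i | P i) G i.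
Proof.
move=> H; apply: (big_rec2 (fun a b => a <= b)); first lra.
by move=> i a b Pi Hab; have := H i Pi; lra.
Qed.

Lemma sR_ge0 (P : pred I) F : (forall i, P i -> 0 <= F i) ->
  0 <= \big[Rplus/0]_(i | P i) F i.
Proof.
move=> H; apply: (big_ind (fun a => 0 <= a)); first lra.
by move=> a b; lra. done.
Qed.

Lemma iter_Rplus n c : iter n (Rplus c) 0 = INR n * c.
Proof. elim: n => [|n IH]; first by rewrite /=; ring. by rewrite iterS IH S_INR; ring. Qed.

Lemma sR_const (A : {pred I}) c : \big[Rplus/0]_(i in A) c = INR #|A| * c.
Proof. by rewrite big_const iter_Rplus. Qed.

Lemma sR_opp (P : pred I) F :
  \big[Rplus/0]_(i | P i) (- F i) = - \big[Rplus/0]_(i | P i) F i.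
Proof.
apply: (big_rec2 (fun a b => a = - b)); first ring.
by move=> i a b _ ->; ring.
Qed.

Lemma sR_minus (P : pred I) F G :
  \big[Rplus/0]_(i | P i) (F i - G i) =
  \big[Rplus/0]_(i | P i) F i - \big[Rplus/0]_(i | P i) G i.
Proof. by rewrite /Rminus big_split /= sR_opp. Qed.

Lemma seq_min (a : I -> R) (s : seq I) x0 : x0 \in s ->
  exists2 x1, x1 \in s & forall x, x \in s -> a x1 <= a x.
Proof.
elim: s x0 => [|y s IH] x0 //= _.
case Hs: (s == [::]).
  move/eqP: Hs => ->. exists y; first by rewrite inE eqxx.
  by move=> x; rewrite inE => /eqP ->; lra.
have [z Hz] : exists z, z \in s by case: s Hs IH => // z s' _ _; exists z; rewrite inE eqxx.
have [x1 Hx1 Hmin] := IH z Hz.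
destruct (Rle_lt_dec (a y) (a x1)) as [H|H].
- exists y; first by rewrite inE eqxx.
  move=> x; rewrite inE => /orP [/eqP ->|Hx]; first lra.
  have := Hmin x Hx; lra.
- exists x1; first by rewrite inE Hx1 orbT.
  move=> x; rewrite inE => /orP [/eqP ->|Hx]; first lra.
  exact: Hmin.
Qed.

Lemma set_min (a : I -> R) (U : {set I}) x0 : x0 \in U ->
  exists2 x1, x1 \in U & forall x, x \in U -> a x1 <= a x.
Proof.
move=> H0. have H0' : x0 \in enum U by rewrite mem_enum.
have [x1] := @seq_min a (enum U) x0 H0'.
rewrite mem_enum => H1 H2; exists x1 => // x Hx; apply: H2; by rewrite mem_enum.
Qed.

Lemma convex_exp l X Y : 0 <= l <= 1 ->
  exp (l * X + (1 - l) * Y) <= l * exp X + (1 - l) * exp Y.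
Proof.
move=> Hl. set Z := l * X + (1 - l) * Y.
have H1 := exp_ineq1_le (X - Z). have H2 := exp_ineq1_le (Y - Z).
have EX : exp X = exp Z * exp (X - Z) by rewrite -exp_plus; f_equal; ring.
have EY : exp Y = exp Z * exp (Y - Z) by rewrite -exp_plus; f_equal; ring.
rewrite EX EY. have Hz := exp_pos Z.
have : l * (exp Z * (1 + (X - Z))) + (1 - l) * (exp Z * (1 + (Y - Z))) = exp Z.
  rewrite /Z; ring.
have A1 : exp Z * (1 + (X - Z)) <= exp Z * exp (X - Z) by apply: Rmult_le_compat_l; lra.
have A2 : exp Z * (1 + (Y - Z)) <= exp Z * exp (Y - Z) by apply: Rmult_le_compat_l; lra.
nra.
Qed.

Lemma hoeff (U : {set I}) (a : I -> R) r s x0 : x0 \in U ->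
  (forall x y, x \in U -> y \in U -> a x - a y <= r) ->
  let abar := / INR #|U| * \big[Rplus/0]_(x in U) a x in
  / INR #|U| * \big[Rplus/0]_(x in U) exp (s * (a x - abar)) <= exp (s * s * (r * r) / 8).
Proof.
move=> HU Hr abar.
have Npos : 0 < INR #|U|.
  apply: lt_0_INR. apply/ltP. by apply/card_gt0P; exists x0.
have [lo Hlo Hlomin] := @set_min a U x0 HU.
have [hi Hhi Hhimax] := @set_min (fun x => - a x) U x0 HU.
have Hhimax' : forall x, x \in U -> a x <= a hi by move=> x Hx; have := Hhimax x Hx; lra.
have Hr0 : a hi - a lo <= r by apply: Hr.
have Hd0 : 0 <= a hi - a lo by have := Hlomin hi Hhi; lra.
have Hbar1 : a lo <= abar.
  rewrite /abar. apply: (Rmult_le_reg_l (INR #|U|)) => //.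
  rewrite -Rmult_assoc Rinv_r; last lra. rewrite Rmult_1_l -sR_const.
  by apply: sR_le.
have Hbar2 : abar <= a hi.
  rewrite /abar. apply: (Rmult_le_reg_l (INR #|U|)) => //.
  rewrite -Rmult_assoc Rinv_r; last lra. rewrite Rmult_1_l -sR_const.
  by apply: sR_le.
have Hexpr : exp (s * s * ((a hi - a lo) * (a hi - a lo)) / 8) <= exp (s * s * (r * r) / 8).
  apply: exp_le_mono. have : (a hi - a lo) * (a hi - a lo) <= r * r by nra.
  have := Rle_0_sqr s. rewrite /Rsqr. nra.
destruct (Req_dec (a hi - a lo) 0) as [Hd|Hd].
-
  have Eq : forall x, x \in U -> a x = abar.
    move=> x Hx; have := Hlomin x Hx; have := Hhimax' x Hx; lra.
  rewrite (eq_bigr (fun _ => 1)); last by move=> x Hx; rewrite Eq // Rminus_diag Rmult_0_r exp_0.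
  rewrite sR_const Rmult_1_r Rinv_l; last lra.
  apply: Rle_trans Hexpr. rewrite Hd. have -> : s * s * (0 * 0) / 8 = 0 by field.
  rewrite exp_0; lra.
- set d := a hi - a lo. have dpos : 0 < d by rewrite /d; lra.
  set X := s * (a lo - abar). set Y := s * (a hi - abar).
  have Hpt : forall x, x \in U -> exp (s * (a x - abar)) <=
      (a hi - a x) / d * exp X + (a x - a lo) / d * exp Y.
    move=> x Hx. have := Hlomin x Hx; have := Hhimax' x Hx => H1 H2.
    have -> : (a x - a lo) / d = 1 - (a hi - a x) / d by rewrite /d; field; lra.
    have -> : s * (a x - abar) = (a hi - a x) / d * X + (1 - (a hi - a x) / d) * Y.
      rewrite /X /Y /d; field; lra.
    apply: convex_exp. apply: frac01 => //. rewrite /d; lra.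
  apply: Rle_trans (_ : (1 - (abar - a lo) / d) * exp (- ((abar - a lo) / d) * (s * d))
       + (abar - a lo) / d * exp ((1 - (abar - a lo) / d) * (s * d)) <= _).
  + apply: (Rmult_le_reg_l (INR #|U|)) => //.
    rewrite -Rmult_assoc Rinv_r; last lra. rewrite Rmult_1_l.
    apply: (Rle_trans _ _ _ (sR_le _ _ _ Hpt)).
    rewrite big_split /= -![\big[Rplus/0]_(i in U) ((_ - a i) / d * _)]/(\big[Rplus/0]_(i in U) (_ * _)).
    have E1 : \big[Rplus/0]_(i in U) ((a hi - a i) / d * exp X) =
        (INR #|U| * a hi - \big[Rplus/0]_(i in U) a i) * (exp X / d).
      rewrite (eq_bigr (fun i => exp X / d * a hi - exp X / d * a i)); last by move=> i _; field; lra.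
      by rewrite sR_minus sR_const !sR_mull; ring.
    have E2 : \big[Rplus/0]_(i in U) ((a i - a lo) / d * exp Y) =
        (\big[Rplus/0]_(i in U) a i - INR #|U| * a lo) * (exp Y / d).
      rewrite (eq_bigr (fun i => exp Y / d * a i - exp Y / d * a lo)); last by move=> i _; field; lra.
      by rewrite sR_minus sR_const !sR_mull; ring.
    rewrite E1 E2.
    have Esum : \big[Rplus/0]_(i in U) a i = INR #|U| * abar by rewrite /abar; field; lra.
    rewrite Esum /X /Y.
    have -> : - ((abar - a lo) / d) * (s * d) = s * (a lo - abar) by field; lra.
    have -> : (1 - (abar - a lo) / d) * (s * d) = s * (a hi - abar) by rewrite /d; field; lra.
    right. rewrite /d. field. lra.
  + apply: Rle_trans Hexpr. set p := (abar - a lo) / d.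
    have Hp : 0 <= p <= 1.
      rewrite /p; apply: frac01 => //. rewrite /d; lra.
    have := core p Hp (s * d). rewrite /d.
    have E : forall z, s * z * (s * z) / 8 = s * s * (z * z) / 8 by move=> z; rewrite /Rdiv; ring.
    by rewrite E.
Qed.
End Sums.

Set Implicit Arguments. Unset Strict Implicit.

Section Comb.
Variable T : finType.

Definition Fam (U : {set T}) (k : nat) : pred {set T} :=
  fun S => (S \subset U) && (#|S| == k).
Definition sF U k (f : {set T} -> R) := \big[Rplus/0]_(S | Fam U k S) f S.
Definition cnt (U : {set T}) k := INR 'C(#|U|, k).
Definition avg U k f := sF U k f / cnt U k.

Lemma sF_one (U : {set T}) k : sF U k (fun _ => 1) = cnt U k.
Proof.
rewrite /sF (eq_bigl (fun S => S \in [set B0 : {set T} | B0 \subset U & #|B0| == k])).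
  by rewrite sR_const cards_draws /cnt Rmult_1_r.
by move=> S; rewrite inE.
Qed.

Lemma cnt_pos (U : {set T}) k : (k <= #|U|)%nat -> 0 < cnt U k.
Proof. move=> H; rewrite /cnt; apply: lt_0_INR; apply/ltP; by rewrite bin_gt0. Qed.

Lemma R1 (U : {set T}) k x (f : {set T} -> R) : x \in U ->
  \big[Rplus/0]_(S | Fam (U :\ x) k S) f (x |: S) =
  \big[Rplus/0]_(S | Fam U k.+1 S && (x \in S)) f S.
Proof.
move=> xU.
symmetry; rewrite (reindex_onto (fun S => x |: S) (fun S => S :\ x)); last first.
  by move=> S /andP [_ xS]; rewrite setD1K.
symmetry; apply: eq_bigl => S. rewrite /Fam setU11 andbT.
case xS: (x \in S).
- rewrite subsetD1 xS /= andbF. symmetry. apply/negbTE/negP => /andP [_ /eqP E].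
  have : x \in (x |: S) :\ x by rewrite E.
  by rewrite !inE eqxx.
- rewrite setU1K ?xS // eqxx andbT subsetD1 xS andbT cardsU1 xS /=.
  by rewrite subUset sub1set xU.
Qed.

Lemma decomp (U : {set T}) k (f : {set T} -> R) :
  \big[Rplus/0]_(x in U) \big[Rplus/0]_(S | Fam (U :\ x) k S) f (x |: S) =
  INR k.+1 * sF U k.+1 f.
Proof.
rewrite (eq_bigr (fun x => \big[Rplus/0]_(S | Fam U k.+1 S) (if x \in S then f S else 0))); last first.
  by move=> x xU; rewrite R1 // big_mkcondr.
rewrite exchange_big /sF -sR_mull. apply: eq_bigr => S /andP [SU /eqP cS].
rewrite -big_mkcondr (eq_bigl (fun x => x \in S)); last first.
  by move=> x; case xS: (x \in S); rewrite ?andbT ?andbF // (subsetP SU).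
by rewrite sR_const cS.
Qed.

Lemma decomp_avg (U : {set T}) k (f : {set T} -> R) : (k.+1 <= #|U|)%nat ->
  avg U k.+1 f = / INR #|U| * \big[Rplus/0]_(x in U) avg (U :\ x) k (fun S => f (x |: S)).
Proof.
move=> Hk. set N := #|U|.
have Hc : forall x, x \in U -> cnt (U :\ x) k = INR 'C(N.-1, k).
  by move=> x xU; rewrite /cnt /N (cardsD1 x U) xU.
rewrite (eq_bigr (fun x => / INR 'C(N.-1, k) * \big[Rplus/0]_(S | Fam (U :\ x) k S) f (x |: S))); last first.
  by move=> x xU; rewrite /avg /sF Hc // Rmult_comm.
rewrite sR_mull decomp /avg /cnt -/N.
have HN : (0 < N)%nat by apply: leq_trans Hk.
have Hb : (0 < 'C(N.-1, k))%nat by rewrite bin_gt0 -ltnS prednK.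
have Hb' : (0 < 'C(N, k.+1))%nat by rewrite bin_gt0.
have E : INR N * INR 'C(N.-1, k) = INR k.+1 * INR 'C(N, k.+1).
  by rewrite -!mult_INR; congr INR; apply: mul_bin_diag.
have P1 : 0 < INR N by apply: lt_0_INR; apply/ltP.
have P2 : 0 < INR 'C(N.-1, k) by apply: lt_0_INR; apply/ltP.
have P3 : 0 < INR 'C(N, k.+1) by apply: lt_0_INR; apply/ltP.
have P4 : 0 < INR k.+1 by apply: lt_0_INR; apply/ltP.
rewrite /Rdiv. apply: (Rmult_eq_reg_l (INR N * INR 'C(N.-1, k))); last nra.
rewrite {1}E. field. lra.
Qed.
End Comb.

Section MGF.
Variable T : finType.
Implicit Types (U S : {set T}) (f g : {set T} -> R).

Definition Lip U k c g := forall S x z, Fam U k S -> x \in S -> z \in U -> z \notin S ->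
  Rabs (g S - g ((S :\ x) :|: [set z])) <= c.

Fixpoint V (N k : nat) : R :=
  match k with 0 => 0 | k'.+1 => (INR (N - k) / INR N.-1) ^ 2 + V N.-1 k' end.

Lemma avg_eq U k f g : (forall S, Fam U k S -> f S = g S) -> avg U k f = avg U k g.
Proof. by move=> H; rewrite /avg /sF (eq_bigr _ H). Qed.

Lemma avg_scal U k c f : avg U k (fun S => c * f S) = c * avg U k f.
Proof. by rewrite /avg /sF sR_mull /Rdiv Rmult_assoc. Qed.

Lemma avg_le U k f g : (k <= #|U|)%nat -> (forall S, Fam U k S -> f S <= g S) ->
  avg U k f <= avg U k g.
Proof.
move=> Hk H. rewrite /avg. apply: Rmult_le_compat_r.
  by apply/Rlt_le/Rinv_0_lt_compat/cnt_pos.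
by apply: sR_le.
Qed.

Lemma avg_const U k c : (k <= #|U|)%nat -> avg U k (fun _ => c) = c.
Proof.
move=> Hk. rewrite -(Rmult_1_r c) avg_scal /avg sF_one /Rdiv Rinv_r; first ring.
by have := cnt_pos Hk; lra.
Qed.

Lemma avg0 U f : avg U 0 f = f set0.
Proof.
rewrite /avg /sF (big_pred1 set0); last first.
  move=> S; rewrite /Fam /=. apply/andP/eqP.
  - by move=> [_ /eqP /cards0_eq].
  - by move=> ->; rewrite sub0set cards0.
by rewrite /cnt bin0 /= /Rdiv Rinv_1 Rmult_1_r.
Qed.

Lemma range U k c g x y : (k.+1 <= #|U|)%nat -> Lip U k.+1 c g ->
  x \in U -> y \in U -> x != y ->
  avg (U :\ x) k (fun S => g (x |: S)) - avg (U :\ y) k (fun S => g (y |: S))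
  <= c * (INR (#|U| - k.+1) / INR #|U|.-1).
Proof.
move=> Hk HL xU yU xy.
have yUx : y \in U :\ x by rewrite !inE eq_sym xy yU.
have xUy : y \in U :\ x by rewrite !inE eq_sym xy yU.
have xUy' : x \in U :\ y by rewrite !inE xy xU.
set N := #|U|.
have cUx : #|U :\ x| = N.-1 by rewrite /N (cardsD1 x U) xU.
have cUy : #|U :\ y| = N.-1 by rewrite /N (cardsD1 y U) yU.
have cW : #|(U :\ x) :\ y| = N.-1.-1 by move: (cardsD1 y (U :\ x)); rewrite yUx cUx add1n => ->.
have EW : (U :\ y) :\ x = (U :\ x) :\ y.
  by apply/setP => z; rewrite !inE; case: (z == x); case: (z == y).
have N2 : (1 <= N.-1)%nat by rewrite -cUx (cardsD1 y) yUx.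
set M := N.-1.
have NM : N = M.+1 by rewrite /M prednK //; apply: leq_trans N2 _; apply: leq_pred.
have Hsplit : forall a b, a \in U -> b \in U -> a != b ->
   \big[Rplus/0]_(S | Fam (U :\ a) k S) g (a |: S) =
   \big[Rplus/0]_(S | Fam U k.+1 S && (a \in S) && (b \in S)) g S +
   \big[Rplus/0]_(S | Fam ((U :\ b) :\ a) k S) g (a |: S).
  move=> a b aU bU ab. rewrite R1 // (bigID (fun S => b \in S)) /=. congr Rplus.
  have aUb : a \in U :\ b by rewrite !inE ab aU.
  rewrite R1 //. apply: eq_bigl => S. rewrite /Fam subsetD1.
  by case: (S \subset U); case: (#|S| == k.+1); case: (a \in S); case: (b \in S).
have Sx := Hsplit x y xU yU xy.
have Sy' : \big[Rplus/0]_(S | Fam (U :\ y) k S) g (y |: S) =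
   \big[Rplus/0]_(S | Fam U k.+1 S && (x \in S) && (y \in S)) g S +
   \big[Rplus/0]_(S | Fam ((U :\ x) :\ y) k S) g (y |: S).
  rewrite (Hsplit y x) //; last by rewrite eq_sym.
  congr Rplus; apply: eq_bigl => S; by rewrite andbAC.
have Hterm : forall S, Fam ((U :\ x) :\ y) k S -> g (x |: S) - g (y |: S) <= c.
  move=> S /andP [SW /eqP cS].
  move: SW; rewrite subsetD1 => /andP [SW yS]; move: SW; rewrite subsetD1 => /andP [SU xS].
  have : Rabs (g (x |: S) - g (((x |: S) :\ x) :|: [set y])) <= c.
    apply: HL => //.
    - rewrite /Fam subUset sub1set xU SU /= cardsU1 xS cS. done.
    - by rewrite setU11.
    - by rewrite !inE negb_or eq_sym xy.
  rewrite setU1K // (setUC S [set y]). move=> H. apply: Rle_trans H. apply: Rle_abs.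
have Hdiff : \big[Rplus/0]_(S | Fam (U :\ x) k S) g (x |: S) -
             \big[Rplus/0]_(S | Fam (U :\ y) k S) g (y |: S) <= c * INR 'C(M.-1, k).
  rewrite Sx Sy' EW.
  have -> : forall a b d : R, a + b - (a + d) = b - d by move=> *; ring.
  rewrite -sR_minus. apply: (Rle_trans _ _ _ (sR_le _ _ _ _ Hterm)).
  rewrite sR_const. rewrite -cW. right.
  rewrite (eq_card (B := [set S : {set T} | S \subset (U :\ x) :\ y & #|S| == k])); last by move=> S; rewrite inE.
  rewrite cards_draws; ring.
have Hb : (0 < 'C(M, k))%nat by rewrite bin_gt0 -ltnS -NM.
have Pb : 0 < INR 'C(M, k) by apply: lt_0_INR; apply/ltP.
have PM : 0 < INR M by apply: lt_0_INR; apply/ltP.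
have Eb : INR M * INR 'C(M.-1, k) = INR (M - k) * INR 'C(M, k).
  by rewrite -!mult_INR; congr INR; apply: mul_bin_down.
rewrite /avg /cnt cUx cUy -/M.
have -> : (N - k.+1)%nat = (M - k)%nat by rewrite NM subSS.
have -> : INR (M - k) / INR M = INR 'C(M.-1, k) / INR 'C(M, k).
  have E2 : INR (M - k) = INR M * INR 'C(M.-1, k) / INR 'C(M, k) by rewrite Eb; field; lra.
  rewrite E2; field; lra.
have -> : forall a b d : R, a / d - b / d = (a - b) * / d by move=> *; rewrite /Rdiv; ring.
rewrite /Rdiv -Rmult_assoc. apply: Rmult_le_compat_r => //.
by apply/Rlt_le/Rinv_0_lt_compat.
Qed.

Lemma Rinv_ge0 x : 0 <= x -> 0 <= / x.
Proof. move=> [H|<-]; [by apply/Rlt_le/Rinv_0_lt_compat | by rewrite Rinv_0; lra]. Qed.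

Lemma mgf k : forall U g c s, (k <= #|U|)%nat -> 0 <= c -> Lip U k c g ->
  avg U k (fun S => exp (s * (g S - avg U k g))) <= exp (s * s * (c * c) * V #|U| k / 8).
Proof.
elim: k => [|k IH] U g c s Hk Hc HL.
  rewrite !avg0 Rminus_diag Rmult_0_r /=.
  have -> : s * s * (c * c) * 0 / 8 = 0 by field.
  lra.
set N := #|U|.
have [x0 x0U] : exists x, x \in U by apply/card_gt0P; apply: leq_trans Hk.
set a := fun x => avg (U :\ x) k (fun S => g (x |: S)).
set abar := avg U k.+1 g.
have Hbar : abar = / INR #|U| * \big[Rplus/0]_(x in U) a x by rewrite /abar decomp_avg.
have Hcard : forall x, x \in U -> #|U :\ x| = N.-1 by move=> x xU; rewrite /N (cardsD1 x U) xU.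
have HkU : forall x, x \in U -> (k <= #|U :\ x|)%nat.
  by move=> x xU; rewrite Hcard // -ltnS prednK //; apply: leq_trans Hk.
have HLx : forall x, x \in U -> Lip (U :\ x) k c (fun S => g (x |: S)).
  move=> x xU S y z /andP [SU /eqP cS] yS zU zS.
  move: SU; rewrite subsetD1 => /andP [SU xS].
  move: zU; rewrite !inE => /andP [zx zU].
  have xy : y != x by apply: contraNneq xS => <-.
  have -> : x |: (S :\ y :|: [set z]) = (x |: S) :\ y :|: [set z].
    apply/setP => w; rewrite !inE.
    case: (w =P x) => [->|] /=; last by [].
    by rewrite eq_sym xy.
  apply: HL.
  - by rewrite /Fam subUset sub1set xU SU /= cardsU1 xS cS.
  - by rewrite !inE yS orbT.
  - done.
  - by rewrite !inE negb_or zx zS.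
set W := exp (s * s * (c * c) * V N.-1 k / 8).
set rho := INR (N - k.+1) / INR N.-1.
have Hrho : 0 <= rho by apply: Rmult_le_pos; [apply: pos_INR | apply/Rinv_ge0/pos_INR].
have Hrange : forall x y, x \in U -> y \in U -> a x - a y <= c * rho.
  move=> x y xU yU. case: (eqVneq x y) => [->|xy].
    rewrite Rminus_diag. by apply: Rmult_le_pos.
  exact: range.
have Step : forall x, x \in U ->
    avg (U :\ x) k (fun S => exp (s * (g (x |: S) - abar))) <= exp (s * (a x - abar)) * W.
  move=> x xU.
  rewrite (avg_eq (g := fun S => exp (s * (a x - abar)) * exp (s * (g (x |: S) - a x)))); last first.
    by move=> S _; rewrite -exp_plus; f_equal; ring.
  rewrite avg_scal. apply: Rmult_le_compat_l; first by apply/Rlt_le/exp_pos.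
  rewrite /W -(Hcard x xU). by apply: IH; [apply: HkU | | apply: HLx].
rewrite decomp_avg //.
have HN : 0 < INR N by apply: lt_0_INR; apply/ltP; apply: leq_trans Hk.
apply: Rle_trans (_ : / INR N * \big[Rplus/0]_(x in U) (exp (s * (a x - abar)) * W) <= _).
  apply: Rmult_le_compat_l; first by apply/Rlt_le/Rinv_0_lt_compat.
  by apply: sR_le => x xU; apply: Step.
rewrite (eq_bigr (fun x => W * exp (s * (a x - abar)))); last by move=> x _; ring.
rewrite sR_mull.
have H := @hoeff _ U a (c * rho) s x0 x0U Hrange. rewrite /= -Hbar in H.
have HW : 0 < W by apply: exp_pos.
apply: Rle_trans (_ : exp (s * s * (c * rho * (c * rho)) / 8) * W <= _).
  rewrite (Rmult_comm W) -Rmult_assoc.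
  apply: Rmult_le_compat_r; first lra. exact: H.
rewrite /W -exp_plus /= -/N -/rho. right. f_equal. field.
Qed.
End MGF.

Section Chern.
Variable T : finType.
Implicit Types (U S : {set T}) (f g : {set T} -> R).

Lemma chernoff U k g c t (Ev : pred {set T}) : (k <= #|U|)%nat -> 0 <= c -> Lip U k c g ->
  0 < c * c * V #|U| k -> 0 <= t ->
  (forall S, Fam U k S -> Ev S -> t <= g S - avg U k g) ->
  avg U k (fun S => if Ev S then 1 else 0) <= exp (- (2 * (t * t)) / (c * c * V #|U| k)).
Proof.
move=> Hk Hc HL HV Ht HE.
set Vc := c * c * V #|U| k.
set s := 4 * t / Vc.
have Hs : 0 <= s by rewrite /s; apply: Rmult_le_pos; [lra | apply/Rlt_le/Rinv_0_lt_compat].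
apply: Rle_trans (_ : avg U k (fun S => exp (- (s * t)) * exp (s * (g S - avg U k g))) <= _).
  apply: avg_le => // S FS. rewrite -exp_plus.
  case E: (Ev S).
  - have := HE S FS E => H. have : 0 <= s * (g S - avg U k g - t) by apply: Rmult_le_pos; lra.
    move=> H2. have := exp_ineq1_le (- (s * t) + s * (g S - avg U k g)). lra.
  - by apply/Rlt_le/exp_pos.
rewrite avg_scal.
have Hm := mgf s Hk Hc HL.
apply: Rle_trans (_ : exp (- (s * t)) * exp (s * s * (c * c) * V #|U| k / 8) <= _).
  by apply: Rmult_le_compat_l; [apply/Rlt_le/exp_pos | exact: Hm].
rewrite -exp_plus. right. f_equal. rewrite /s /Vc in HV *. field. split => H0; rewrite H0 in HV; lra.
Qed.

Lemma V_bound w k : (1 <= w)%nat ->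
  V (w + k) k <= INR w ^ 2 * (/ (INR w - / 2) - / (INR (w + k) - / 2)).
Proof.
move=> Hw. have Hw1 : 1 <= INR w by apply: (le_INR 1); apply/leP.
elim: k => [|k IH].
  rewrite addn0 /= Rminus_diag. lra.
rewrite /=. rewrite -/(V _ _).
have -> : ((w + k.+1).-1 = w + k)%nat by rewrite addnS.
have -> : (w + k.+1 - k.+1 = w)%nat by rewrite addnK.
have Ej : INR (w + k.+1) = INR (w + k) + 1 by rewrite addnS S_INR.
rewrite Ej.
have Hj : 1 <= INR (w + k) by apply: (le_INR 1); apply/leP; apply: leq_trans Hw (leq_addr _ _).
set j := INR (w + k) in Hj IH *. set x := INR w in Hw1 IH *.
have Key : / (j * j) <= / (j - / 2) - / (j + 1 - / 2).
  have -> : / (j - / 2) - / (j + 1 - / 2) = / (j * j - / 4) by field; repeat split; nra.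
  have q : 0 < / 4 < 1.
    split; first by apply: Rinv_0_lt_compat; lra.
    rewrite -Rinv_1. apply: Rinv_lt_contravar; lra.
  apply: Rinv_le_contravar; nra.
have -> : x / j * (x / j * 1) = x * (x * 1) * / (j * j) by field; lra.
have Hx2 : 0 <= x * (x * 1) by nra.
have := Rmult_le_compat_l _ _ _ Hx2 Key. move: IH. nra.
Qed.
End Chern.

Lemma Rabs_bnd x b : Rabs x <= b -> - b <= x <= b.
Proof. rewrite /Rabs; case: Rcase_abs => ? ?; lra. Qed.

Section Trans.
Variables m u : nat.
Local Notation T := ('I_(m + u)).
Local Notation X := [set: T].

Lemma cardX : #|X| = (m + u)%nat.
Proof. by rewrite cardsT card_ord. Qed.

Lemma cardC_m (S : {set T}) : #|S| = m -> #|~: S| = u.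
Proof. move=> HS; move: (cardsC S); rewrite HS card_ord; move=> H; apply/eqP; by rewrite -(eqn_add2l m) H. Qed.

Lemma cardC_u (S : {set T}) : #|S| = u -> #|~: S| = m.
Proof. move=> HS; move: (cardsC S); rewrite HS card_ord => H; apply/eqP; by rewrite -(eqn_add2l u) H addnC. Qed.

Lemma prob_avg k (P : {set T} -> bool) :
  prob_subsets k P = avg X k (fun S => if P S then 1 else 0).
Proof.
rewrite /prob_subsets /avg /cnt cardsT -card_draws.
congr Rdiv. rewrite /sF -big_mkcondr.
rewrite (eq_bigl (fun S => S \in [set S0 : {set T} | (#|S0| == k) && P S0])).
  by rewrite sR_const Rmult_1_r.
by move=> S; rewrite /Fam inE subsetT.
Qed.

Lemma avg_add U k (f g : {set T} -> R) : avg U k (fun S => f S + g S) = avg U k f + avg U k g.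
Proof. by rewrite /avg /sF big_split /=; rewrite /Rdiv Rmult_plus_distr_r. Qed.

Lemma avg_compl k (P : {set T} -> bool) : (k <= m + u)%nat ->
  avg X k (fun S => if P S then 1 else 0) = 1 - avg X k (fun S => if ~~ P S then 1 else 0).
Proof.
move=> Hk.
have : avg X k (fun S => (if P S then 1 else 0) + (if ~~ P S then 1 else 0)) = 1.
  rewrite (avg_eq (g := fun _ => 1)); first by apply: avg_const; rewrite cardX.
  by move=> S _; case: (P S) => /=; ring.
rewrite avg_add. lra.
Qed.

Lemma avg_setC (f : {set T} -> R) : avg X m f = avg X u (fun S => f (~: S)).
Proof.
rewrite /avg /sF /cnt cardX (reindex_inj (@setC_inj _)).
congr Rdiv.
  apply: eq_bigl => S. rewrite /Fam !subsetT /=.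
  apply/eqP/eqP => H. by have := cardC_m H; rewrite setCK.
  exact: cardC_u.
congr INR. by rewrite -[in RHS]bin_sub ?leq_addl // addnK.
Qed.

Definition sig3 (q : {set T} * (T * T)) : {set T} * (T * T) :=
  (q.1 :\ q.2.1 :|: [set q.2.2], (q.2.2, q.2.1)).

Definition Q3 (q : {set T} * (T * T)) : bool :=
  Fam X m q.1 && ((q.2.1 \in q.1) && (q.2.2 \in ~: q.1)).

Lemma card_swap (S : {set T}) x z : x \in S -> z \notin S -> #|S :\ x :|: [set z]| = #|S|.
Proof.
move=> xS zS. rewrite setUC cardsU1 (cardsD1 x S) xS !inE negb_and negbK zS orbT.
by [].
Qed.

Lemma sig3Q q : Q3 q -> Q3 (sig3 q).
Proof.
case: q => S [x z] /andP [/andP [_ /eqP cS] /andP [xS]]. rewrite inE /= => zS.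
rewrite /Q3 /sig3 /Fam /= subsetT /= card_swap // cS eqxx /=.
rewrite !inE eqxx orbT /=. apply/negP => /orP [/andP [/negP H _]|/eqP E]; first by apply: H; rewrite eqxx.
by move: zS; rewrite -E xS.
Qed.

Lemma sig3K q : Q3 q -> sig3 (sig3 q) = q.
Proof.
case: q => S [x z] /andP [_ /andP [xS]]. rewrite inE /= => zS.
rewrite /= in xS. rewrite /sig3 /=. congr pair. apply/setP => w; rewrite !inE.
case: (eqVneq w x) => [->|wx] /=; first by rewrite xS orbT.
case: (eqVneq w z) => [->|wz] /=; last by rewrite !orbF.
by rewrite (negbTE zS).
Qed.

Lemma swap_sum (F : {set T} -> T -> T -> R) :
  \big[Rplus/0]_(S | Fam X m S) \big[Rplus/0]_(x in S) \big[Rplus/0]_(z in ~: S) F S x z =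
  \big[Rplus/0]_(S | Fam X m S) \big[Rplus/0]_(x in S) \big[Rplus/0]_(z in ~: S) F (S :\ x :|: [set z]) z x.
Proof.
have P2 : forall G : {set T} -> T -> T -> R,
  \big[Rplus/0]_(S | Fam X m S) \big[Rplus/0]_(x in S) \big[Rplus/0]_(z in ~: S) G S x z =
  \big[Rplus/0]_(q | Q3 q) G q.1 q.2.1 q.2.2.
  move=> G. under eq_bigr => S _ do rewrite pair_big_dep. by rewrite pair_big_dep.
rewrite !P2 (reindex_onto sig3 sig3); last by move=> q Hq; apply: sig3K.
apply: eq_bigl => q. apply/andP/idP.
- move=> [H /eqP E]. rewrite -E. exact: sig3Q.
- move=> H. split; first exact: sig3Q. by rewrite sig3K.
Qed.
End Trans.

Section Trans2.
Variables m u : nat.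
Local Notation T := ('I_(m + u)).
Local Notation X := [set: T].
Variables (y : T -> R) (Hy : (T -> R) -> Prop) (B beta : R) (L : {set T} -> (T -> R)).
Hypothesis hm : (0 < m)%nat.
Hypothesis hu : (0 < u)%nat.
Hypothesis HB : 0 < B.
Hypothesis Hb : bounded_by y Hy B.
Hypothesis Hs : cost_stable m y L beta.
Hypothesis HL : forall S : {set T}, #|S| = m -> Hy (L S).

Lemma sumR_E (A : {set T}) (f : T -> R) : sumR A f = \big[Rplus/0]_(i in A) f i.
Proof. by []. Qed.

Definition Phi (S : {set T}) := test_err u y (L S) S - train_err m y (L S) S.

Lemma cost_bnd (S : {set T}) z : #|S| = m -> 0 <= cost y (L S) z <= B ^ 2.
Proof.
move=> HS. have := Hb (HL HS) z => Hz. rewrite /cost -pow2_abs.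
have := Rabs_pos (L S z - y z). nra.
Qed.

Lemma exS : exists S : {set T}, #|S| = m.
Proof.
have : (0 < #|[set S : {set T} | #|S| == m]|)%nat.
  by rewrite card_draws card_ord bin_gt0 leq_addr.
by case/card_gt0P => S; rewrite inE => /eqP; exists S.
Qed.

Lemma beta_ge0 : 0 <= beta.
Proof.
have [S HS] := exS.
have [x xS] : exists x, x \in S by apply/card_gt0P; rewrite HS.
have [z zS] : exists z, z \in ~: S by apply/card_gt0P; rewrite (cardC_m HS).
move: zS; rewrite inE => zS.
have H2 := Hs HS xS zS x. exact: (Rle_trans _ _ _ (Rabs_pos _) H2).
Qed.

Lemma Phi_mul (S : {set T}) : #|S| = m -> INR m * INR u * Phi S =
  \big[Rplus/0]_(x in S) \big[Rplus/0]_(z in ~: S) (cost y (L S) z - cost y (L S) x).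
Proof.
move=> HS. set c := cost y (L S).
rewrite (eq_bigr (fun x => \big[Rplus/0]_(z in ~: S) c z - INR u * c x)); last first.
  by move=> x _; rewrite sR_minus sR_const (cardC_m HS).
rewrite sR_minus sR_const sR_mull HS.
rewrite /Phi /test_err /train_err !sumR_E -/c.
have Pm : 0 < INR m by apply: lt_0_INR; apply/ltP.
have Pu : 0 < INR u by apply: lt_0_INR; apply/ltP.
set P := \big[Rplus/0]_(i in ~: S) c i. set Q := \big[Rplus/0]_(i in S) c i.
field. lra.
Qed.

Lemma EPhi : avg X m Phi <= beta.
Proof.
have Pm : 0 < INR m by apply: lt_0_INR; apply/ltP.
have Pu : 0 < INR u by apply: lt_0_INR; apply/ltP.
have Hk : (m <= #|X|)%nat by rewrite cardX leq_addr.
have Hc := cnt_pos Hk.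
suff : INR m * INR u * sF X m Phi <= INR m * INR u * (beta * cnt X m).
  rewrite /avg => H. apply: (Rmult_le_reg_l (INR m * INR u * cnt X m)); first by repeat apply: Rmult_lt_0_compat.
  have -> : INR m * INR u * cnt X m * (sF X m Phi / cnt X m) = INR m * INR u * sF X m Phi by field; lra.
  nra.
rewrite /sF -sR_mull.
rewrite (eq_bigr (fun S : {set T} => \big[Rplus/0]_(x in S) \big[Rplus/0]_(z in ~: S) (cost y (L S) z - cost y (L S) x))); last first.
  by move=> S /andP [_ /eqP HS]; rewrite Phi_mul.
have Hsw : \big[Rplus/0]_(S : {set T} | Fam X m S) \big[Rplus/0]_(x in S) \big[Rplus/0]_(z in ~: S) cost y (L S) x =
  \big[Rplus/0]_(S : {set T} | Fam X m S) \big[Rplus/0]_(x in S) \big[Rplus/0]_(z in ~: S) cost y (L (S :\ x :|: [set z])) z :=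
  swap_sum (fun S x z => cost y (L S) x).
have E3 : forall F G : {set T} -> T -> T -> R,
  \big[Rplus/0]_(S : {set T} | Fam X m S) \big[Rplus/0]_(x in S) \big[Rplus/0]_(z in ~: S) (F S x z - G S x z) =
  \big[Rplus/0]_(S : {set T} | Fam X m S) \big[Rplus/0]_(x in S) \big[Rplus/0]_(z in ~: S) F S x z -
  \big[Rplus/0]_(S : {set T} | Fam X m S) \big[Rplus/0]_(x in S) \big[Rplus/0]_(z in ~: S) G S x z.
  move=> F G. rewrite -sR_minus. apply: eq_bigr => S _. rewrite -sR_minus.
  apply: eq_bigr => x _. by rewrite sR_minus.
rewrite (E3 (fun S x z => cost y (L S) z) (fun S x z => cost y (L S) x)) Hsw -E3.
have R3 : INR m * INR u * (beta * cnt X m) =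
  \big[Rplus/0]_(S : {set T} | Fam X m S) \big[Rplus/0]_(x in S) \big[Rplus/0]_(z in ~: S) beta.
  rewrite -sF_one /sF -!sR_mull. apply: eq_bigr => S /andP [_ /eqP HS].
  rewrite (eq_bigr (fun _ => INR u * beta)); last by move=> x _; rewrite sR_const (cardC_m HS).
  rewrite sR_const HS. ring.
rewrite R3. apply: sR_le => S /andP [_ /eqP HS]. apply: sR_le => x xS. apply: sR_le => z.
rewrite inE => zS. have H := Hs HS xS zS z. rewrite Rabs_minus_sym in H. exact: (Rle_trans _ _ _ (Rle_abs _) H).
Qed.


Lemma div_bnd P K v : 0 < v -> - K <= P <= K -> - (K / v) <= P / v <= K / v.
Proof.
move=> Hv [H1 H2]. have Hi : 0 < / v by apply: Rinv_0_lt_compat.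
rewrite /Rdiv. split; [rewrite Ropp_mult_distr_l|]; apply: Rmult_le_compat_r; lra.
Qed.

Lemma sum_diff_bnd (A : {set T}) (f g : T -> R) :
  (forall i, i \in A -> - beta <= f i - g i <= beta) ->
  - (INR #|A| * beta) <= \big[Rplus/0]_(i in A) f i - \big[Rplus/0]_(i in A) g i <= INR #|A| * beta.
Proof.
move=> H. rewrite -sR_minus. split.
- rewrite -sR_const -sR_opp. apply: sR_le => i Hi. by have := H i Hi; lra.
- rewrite -sR_const. apply: sR_le => i Hi. by have := H i Hi; lra.
Qed.

Lemma Lip_Phi : Lip X m (2 * beta + B ^ 2 * INR (m + u) / (INR m * INR u)) Phi.
Proof.
move=> S x z /andP [_ /eqP HS] xS _ zS.
have Hb0 := beta_ge0.
have Pm : 0 < INR m by apply: lt_0_INR; apply/ltP.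
have Pu : 0 < INR u by apply: lt_0_INR; apply/ltP.
set S' := S :\ x :|: [set z].
have HS' : #|S'| = m by rewrite card_swap.
set c1 := cost y (L S). set c2 := cost y (L S').
have st : forall w, - beta <= c1 w - c2 w <= beta.
  move=> w. apply: Rabs_bnd. rewrite Rabs_minus_sym. exact: Hs.
have b1 : forall w, 0 <= c1 w <= B ^ 2 by move=> w; exact: cost_bnd.
have b2 : forall w, 0 <= c2 w <= B ^ 2 by move=> w; exact: cost_bnd.
have zC : z \in ~: S by rewrite inE.
have xC : x \in ~: S' by rewrite !inE negb_or negb_and negbK eqxx /=; apply/eqP => E; move: zS; rewrite -E xS.
have zS' : z \in S' by rewrite !inE eqxx orbT.
have ET : ~: S' :\ x = ~: S :\ z.
  apply/setP => w; rewrite !inE. case: (eqVneq w x) => [->|wx] /=; first by rewrite xS /= andbF.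
  case: (eqVneq w z) => [->|wz] /=; [by rewrite orbT | by rewrite orbF].
have ES : S' :\ z = S :\ x.
  apply/setP => w; rewrite !inE. case: (eqVneq w z) => [->|wz] /=; first by rewrite (negbTE zS) andbF.
  by rewrite orbF.
have cT : INR #|~: S :\ z| = INR u - 1.
  have e1 := cardsD1 z (~: S). rewrite zC (cardC_m HS) add1n in e1. rewrite [X in INR X - 1]e1 S_INR. ring.
have cS : INR #|S :\ x| = INR m - 1.
  have e1 := cardsD1 x S. rewrite xS HS add1n in e1. rewrite [X in INR X - 1]e1 S_INR. ring.
rewrite /Phi /test_err /train_err !sumR_E.
rewrite (big_setD1 _ zC) (big_setD1 _ xC) (big_setD1 _ xS) (big_setD1 _ zS') ET ES.
set A1 := \big[Rplus/0]_(i in ~: S :\ z) c1 i. set A2 := \big[Rplus/0]_(i in ~: S :\ z) c2 i.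
set C1 := \big[Rplus/0]_(i in S :\ x) c1 i. set C2 := \big[Rplus/0]_(i in S :\ x) c2 i.
have HA : - ((INR u - 1) * beta) <= A1 - A2 <= (INR u - 1) * beta.
  rewrite -cT. apply: sum_diff_bnd => i _. exact: st.
have HC : - ((INR m - 1) * beta) <= C2 - C1 <= (INR m - 1) * beta.
  rewrite -cS. apply: sum_diff_bnd => i _. have := st i. lra.
have HP := @div_bnd (c1 z - c2 x + (A1 - A2)) (B ^ 2 + (INR u - 1) * beta) (INR u) Pu.
have HQ := @div_bnd (c2 z - c1 x + (C2 - C1)) (B ^ 2 + (INR m - 1) * beta) (INR m) Pm.
have E : (c1 z + A1) / INR u - (c1 x + C1) / INR m - ((c2 x + A2) / INR u - (c2 z + C2) / INR m) =
   (c1 z - c2 x + (A1 - A2)) / INR u + (c2 z - c1 x + (C2 - C1)) / INR m.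
  field; lra.
rewrite E. apply: Rabs_le.
have EK1 : (B ^ 2 + (INR u - 1) * beta) / INR u = B ^ 2 / INR u + beta - beta / INR u by field; lra.
have EK2 : (B ^ 2 + (INR m - 1) * beta) / INR m = B ^ 2 / INR m + beta - beta / INR m by field; lra.
have Ec : 2 * beta + B ^ 2 * INR (m + u) / (INR m * INR u) = B ^ 2 / INR u + B ^ 2 / INR m + 2 * beta.
  rewrite plus_INR. field; lra.
have Hbu : 0 <= beta / INR u by apply: Rmult_le_pos => //; apply/Rlt_le/Rinv_0_lt_compat.
have Hbm : 0 <= beta / INR m by apply: Rmult_le_pos => //; apply/Rlt_le/Rinv_0_lt_compat.
have hb1 := b1 z. have hb2 := b2 x. have hb3 := b2 z. have hb4 := b1 x.
rewrite Ec. rewrite EK1 in HP. rewrite EK2 in HQ.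
have HP' : - (B ^ 2 + (INR u - 1) * beta) <= c1 z - c2 x + (A1 - A2) <= B ^ 2 + (INR u - 1) * beta by lra.
have HQ' : - (B ^ 2 + (INR m - 1) * beta) <= c2 z - c1 x + (C2 - C1) <= B ^ 2 + (INR m - 1) * beta by lra.
have := HP HP'. have := HQ HQ'. lra.
Qed.
End Trans2.

Lemma V_nonneg N k : 0 <= V N k.
Proof.
elim: k N => [|k IH] N /=; first lra.
have := IH N.-1. have := pow2_ge_0 (INR (N - k.+1) / INR N.-1). lra.
Qed.

Lemma V_pos w k : (1 <= w)%nat -> (1 <= k)%nat -> 0 < V (w + k) k.
Proof.
move=> Hw; case: k => [|k] // _. rewrite /=. rewrite -/(V _ _).
have -> : ((w + k.+1).-1 = w + k)%nat by rewrite addnS.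
have -> : (w + k.+1 - k.+1 = w)%nat by rewrite addnK.
have Hw1 : 0 < INR w by apply: lt_0_INR; apply/ltP.
have Hj : 0 < INR (w + k) by apply: lt_0_INR; apply/ltP; apply: leq_trans Hw (leq_addr _ _).
have := V_nonneg (w + k) k.
have : 0 < INR w / INR (w + k) by apply: Rmult_lt_0_compat => //; apply: Rinv_0_lt_compat.
nra.
Qed.

Lemma alpha_eq (m u : nat) : (1 <= m)%nat -> (m <= u)%nat ->
  INR u ^ 2 * (/ (INR u - / 2) - / (INR (u + m) - / 2)) = alpha m u.
Proof.
move=> Hm Hmu.
have Hm1 : 1 <= INR m by apply: (le_INR 1); apply/leP.
have Hu1 : INR m <= INR u by apply: le_INR; apply/leP.
rewrite /alpha Rmax_right // plus_INR. field. repeat split; lra.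
Qed.

Lemma Lip_compl (m u : nat) c (g : {set 'I_(m + u)} -> R) :
  Lip [set: 'I_(m + u)] m c g -> Lip [set: 'I_(m + u)] u c (fun S => g (~: S)).
Proof.
move=> HL S x z /andP [_ /eqP HS] xS _ zS.
have -> : ~: (S :\ x :|: [set z]) = ~: S :\ z :|: [set x].
  apply/setP => w; rewrite !inE.
  case: (eqVneq w x) => [->|wx] /=.
    have xz : x != z by apply/eqP => E; move: zS; rewrite -E xS.
    by rewrite (negbTE xz) orbT.
  case: (eqVneq w z) => [->|wz] /=; first by rewrite orbT.
  by rewrite !orbF.
apply: HL.
- by rewrite /Fam subsetT (cardC_u HS) eqxx.
- by rewrite inE.
- by rewrite inE.
- by rewrite inE negbK.
Qed.

Lemma alpha_sym m u : alpha m u = alpha u m.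
Proof. by rewrite /alpha Rmax_comm (Rplus_comm (INR m)) (Rmult_comm (INR m)). Qed.

Close Scope R_scope.

Theorem theorem8 (m u : nat) (hm : (0 < m)%N) (hu : (0 < u)%N)
  (y : 'I_(m + u) -> R) (H : ('I_(m + u) -> R) -> Prop) (B beta : R)
  (L : {set 'I_(m + u)} -> ('I_(m + u) -> R)) :
  (0 < B)%R ->
  bounded_by y H B ->
  cost_stable m y L beta ->
  (forall S : {set 'I_(m + u)}, #|S| = m -> H (L S)) ->
  forall delta : R, (0 < delta)%R ->
  (1 - delta <=
   prob_subsets m (fun S =>
     Rleb (test_err u y (L S) S)
          (train_err m y (L S) S + beta
           + (2 * beta + B ^ 2 * INR (m + u) / (INR m * INR u))
             * sqrt (alpha m u * ln (/ delta) / 2))))%R.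
Proof.
Open Scope R_scope.
move=> HB Hb Hs HL delta Hd.
set c := (2 * beta + B ^ 2 * INR (m + u) / (INR m * INR u)).
set t := c * sqrt (alpha m u * ln (/ delta) / 2).
rewrite prob_avg.
have Hk : (m <= #|[set: 'I_(m + u)]|)%nat by rewrite cardX leq_addr.
destruct (Rle_lt_dec 1 delta) as [Hd1|Hd1].
  suff : 0 <= avg [set: 'I_(m + u)] m
     (fun S => if Rleb (test_err u y (L S) S) (train_err m y (L S) S + beta + t) then 1 else 0) by lra.
  rewrite /avg. apply: Rmult_le_pos.
    apply: sR_ge0 => S _; case: Rleb; lra.
  by apply/Rlt_le/Rinv_0_lt_compat/cnt_pos.
pose Ev := fun S : {set 'I_(m + u)} =>
  ~~ Rleb (test_err u y (L S) S) (train_err m y (L S) S + beta + t).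
rewrite avg_compl; last by rewrite leq_addr.
change (1 - delta <= 1 - avg [set: 'I_(m + u)] m (fun S => if Ev S then 1 else 0)).
suff : avg [set: 'I_(m + u)] m (fun S => if Ev S then 1 else 0) <= delta by lra.
have Hb0 := beta_ge0 hm hu Hs.
have Pm : 0 < INR m by apply: lt_0_INR; apply/ltP.
have Pu : 0 < INR u by apply: lt_0_INR; apply/ltP.
have Hc : 0 < c.
  rewrite /c. have : 0 < B ^ 2 * INR (m + u) / (INR m * INR u).
    apply: Rmult_lt_0_compat; last by apply: Rinv_0_lt_compat; nra.
    apply: Rmult_lt_0_compat; first by apply: pow_lt.
    apply: lt_0_INR; apply/ltP. by rewrite addn_gt0 hm.
  lra.
have HL0 : 0 < ln (/ delta).
  rewrite -ln_1. apply: ln_increasing; first lra.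
  rewrite -Rinv_1. apply: Rinv_lt_contravar; lra.
have Ht : 0 <= t by apply: Rmult_le_pos; [lra | apply: sqrt_pos].
have Hev : forall S, Fam [set: 'I_(m + u)] m S -> Ev S ->
    t <= Phi y L S - avg [set: 'I_(m + u)] m (Phi y L).
  move=> S _. rewrite /Ev /Rleb. case: Rle_dec => // Hn _.
  have := EPhi hm hu Hs. rewrite /Phi. lra.
have fin : forall k (g : {set 'I_(m + u)} -> R) (Ev' : pred {set 'I_(m + u)}),
    (k <= #|[set: 'I_(m + u)]|)%nat -> Lip [set: 'I_(m + u)] k c g ->
    0 < V #|[set: 'I_(m + u)]| k -> V #|[set: 'I_(m + u)]| k <= alpha m u ->
    (forall S, Fam [set: 'I_(m + u)] k S -> Ev' S -> t <= g S - avg [set: 'I_(m + u)] k g) ->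
    avg [set: 'I_(m + u)] k (fun S => if Ev' S then 1 else 0) <= delta.
  move=> k g Ev' Hk' HLip HV HVa HE.
  have HVc : 0 < c * c * V #|[set: 'I_(m + u)]| k by apply: Rmult_lt_0_compat => //; nra.
  apply: Rle_trans (chernoff Hk' (Rlt_le _ _ Hc) HLip HVc Ht HE) _.
  set v := V #|[set: 'I_(m + u)]| k in HV HVa HVc *.
  have Hal : 0 < alpha m u by lra.
  have Htt : t * t = c * c * (alpha m u * ln (/ delta) / 2).
    rewrite /t. have -> : c * sqrt (alpha m u * ln (/ delta) / 2) * (c * sqrt (alpha m u * ln (/ delta) / 2))
       = c * c * (sqrt (alpha m u * ln (/ delta) / 2) * sqrt (alpha m u * ln (/ delta) / 2)) by ring.
    rewrite sqrt_sqrt //. apply: Rmult_le_pos; [nra | lra].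
  rewrite Htt.
  have -> : - (2 * (c * c * (alpha m u * ln (/ delta) / 2))) / (c * c * v) = - (alpha m u * ln (/ delta) / v).
    field. split; lra.
  have Hle : ln (/ delta) <= alpha m u * ln (/ delta) / v.
    apply: (Rmult_le_reg_l v) => //. have -> : v * (alpha m u * ln (/ delta) / v) = alpha m u * ln (/ delta) by field; lra.
    nra.
  apply: Rle_trans (_ : exp (- ln (/ delta)) <= _).
    apply: exp_le_mono. lra.
  rewrite ln_Rinv // Ropp_involutive exp_ln //. lra.
case: (leqP m u) => Hmu.
- apply: (fin m (Phi y L) Ev) => //.
  + exact: (Lip_Phi hm hu HB Hb Hs HL).
  + rewrite cardX addnC. exact: V_pos.
  + rewrite cardX addnC -(alpha_eq hm Hmu). exact: V_bound.
- rewrite avg_setC.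
  apply: (fin u (fun S => Phi y L (~: S)) (fun S => Ev (~: S))).
  + by rewrite cardX leq_addl.
  + apply: Lip_compl. exact: (Lip_Phi hm hu HB Hb Hs HL).
  + rewrite cardX. exact: V_pos.
  + rewrite cardX alpha_sym -(alpha_eq hu (ltnW Hmu)). exact: V_bound.
  + move=> S /andP [_ /eqP HS] HE. rewrite -avg_setC. apply: Hev => //.
    by rewrite /Fam subsetT (cardC_u HS) eqxx.
Qed.
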